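(* Let $K,M\in\mathbb{N}$, $L>0$, and let $\mathbf{x}$ be a random vector with probability density $p\colon\mathbb{R}^K\to\mathbb{R}_+$ supported on $\mathcal{X}=[0,1]^K$ (i.e. $\Pr(\mathbf{x}\in\mathcal{X})=1$) which is $L$-Lipschitz on $\mathbb{R}^K$ with respect to the $\ell_1$-norm. Let $\tilde{\mathbf{x}}=\Delta_M(\mathbf{x})$ be the element-wise quantization with $\Delta_M(x)=\lfloor Mx\rfloor/M$, and let $\bar{\mathbf{x}}=\tilde{\mathbf{x}}+\mathbf{u}$ with $\mathbf{u}$ uniform on $[0,\frac1M]^K$ independent of $\mathbf{x}$; let $q$ be the density of $\bar{\mathbf{x}}$. Then $|p(\mathbf{x})-q(\mathbf{x})|\le\frac{LK}{2M}$ for every $\mathbf{x}\in\mathcal{X}$.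
   Context: Equivalently, $q$ is constant on each cell $\Delta_M^{-1}(\tilde{\mathbf{x}})$ and equals $M^K\int_{\Delta_M^{-1}(\tilde{\mathbf{x}})}p\,\mathrm{d}\lambda^K$ there. *)

(* Defs.v *)
From HB Require Import structures.
From mathcomp Require Import all_boot all_order all_algebra.
From mathcomp Require Import all_classical all_reals all_analysis.
Set Implicit Arguments. Unset Strict Implicit. Unset Printing Implicit Defensive.
Import Order.TTheory GRing.Theory Num.Theory.
Local Open Scope ring_scope.
Local Open Scope ereal_scope.

(* Lebesgue integral over R^K of a nonnegative function, as the iterated
   one-dimensional Lebesgue integral (Tonelli). *)
Fixpoint iint (R : realType) (k : nat) : ('rV[R]_k -> \bar R) -> \bar R :=
  match k with
  | 0 => fun f => f 0%R
  | k'.+1 => fun f =>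
      \int[@lebesgue_measure R]_t iint (fun v : 'rV[R]_k' =>
                                 f (row_mx (\row_(i < 1) t) v))
  end.

Local Close Scope ereal_scope.

Definition in_cube (R : realType) (K : nat) (x : 'rV[R]_K) : bool :=
  [forall i, (0 <= x 0 i <= 1)].

Definition l1dist (R : realType) (K : nat) (x y : 'rV[R]_K) : R :=
  \sum_(i < K) `|x 0 i - y 0 i|.

Definition quant (R : realType) (M : nat) (t : R) : R :=
  (Num.floor (M%:R * t))%:~R / M%:R.

Definition quantv (R : realType) (K M : nat) (x : 'rV[R]_K) : 'rV[R]_K :=
  \row_i quant M (x 0 i).

(* density of xbar = Delta_M(x) + u: constant on each cell
   Delta_M^{-1}(Delta_M x), equal to M^K * \int_{cell} p. *)
Definition qdens (R : realType) (K M : nat) (p : 'rV[R]_K -> R)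
    (x : 'rV[R]_K) : R :=
  (M%:R ^+ K) * fine (iint (fun y =>
     (p y * (if quantv M y == quantv M x then 1 else 0))%:E)).

(* Main.v *)
Require Import Defs.
From HB Require Import structures.
From mathcomp Require Import all_boot all_order all_algebra.
From mathcomp Require Import all_classical all_reals all_analysis.
From mathcomp Require Import ring lra.
Import Order.TTheory GRing.Theory Num.Theory.
Import numFieldNormedType.Exports.
Local Open Scope ring_scope.

Section S.
Variable R : realType.

Lemma lin_int (l r a b : R) : l < r ->
  (\int[@lebesgue_measure R]_(t in `[l, r]) (a + b * (t - (l + r) / 2))%:E =
   (a * (r - l))%:E)%E.
Proof.
move=> lr.
pose F := fun t : R => a * t + b * ((t - (l + r) / 2) ^+ 2) / 2.
have dF : forall t : R, is_derive t 1 F (a + b * (t - (l + r) / 2)).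
  move=> t; rewrite /F.
  apply: is_derive_eq.
  rewrite /= !(scaler0, subr0, addr0, add0r); rewrite /GRing.scale /=. by field.
have dG : forall t : R, is_derive t 1 (fun t => a + b * (t - (l + r) / 2)) b.
  move=> t; apply: is_derive_eq.
  rewrite /= !(scaler0, subr0, addr0, add0r); rewrite /GRing.scale /=. by field.
have H := (@continuous_FTC2 _ (fun t => a + b * (t - (l + r) / 2)) F l r lr).
rewrite H.
- rewrite -EFinN -EFinD; congr (_%:E); rewrite /F; by field.
- apply: continuous_subspaceT => y.
  apply/differentiable_continuous/derivable1_diffP.
  exact: ex_derive.
- split.
  + by move=> x _; exact: ex_derive.
  + apply: cvg_at_right_filter.
    apply/differentiable_continuous/derivable1_diffP.
    exact: ex_derive.
  + apply: cvg_at_left_filter.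
    apply/differentiable_continuous/derivable1_diffP.
    exact: ex_derive.
- by move=> x _; rewrite derive1E; apply: (@derive_val _ _ _ _ _ _ _ (dF x)).
Qed.

Lemma lin_cont (a b c : R) : continuous (fun t : R => a + b * (t - c)).
Proof.
move=> y; have dG : forall t : R, is_derive t 1 (fun t => a + b * (t - c)) b.
  move=> t; apply: is_derive_eq.
  by rewrite /= !(scaler0, subr0, addr0, add0r); rewrite /GRing.scale /= mulr1 mul1r.
apply/differentiable_continuous/derivable1_diffP.
exact: ex_derive.
Qed.

Lemma quant_eqE (M : nat) (t x0 : R) : (0 < M)%N ->
  (quant M t == quant M x0) =
  ((Num.floor (M%:R * x0))%:~R / M%:R <= t < (Num.floor (M%:R * x0) + 1)%:~R / M%:R).
Proof.
move=> M0; have MP : (0 : R) < M%:R by rewrite ltr0n.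
rewrite /quant.
have -> : ((Num.floor (M%:R * t))%:~R / M%:R == (Num.floor (M%:R * x0))%:~R / M%:R :> R)
   = (Num.floor (M%:R * t) == Num.floor (M%:R * x0)).
  apply/eqP/eqP => [h|->//].
  have : (Num.floor (M%:R * t))%:~R = (Num.floor (M%:R * x0))%:~R :> R.
    by have := congr1 (fun z => z * M%:R) h; rewrite /= !divfK // lt0r_neq0.
  by move/intr_inj.
by rewrite floor_eq !ler_pdivrMr // !ltr_pdivlMr // [t * _]mulrC.
Qed.

Lemma cell_int (M : nat) (x0 a b l r : R) : (0 < M)%N ->
  l = (Num.floor (M%:R * x0))%:~R / M%:R ->
  r = (Num.floor (M%:R * x0) + 1)%:~R / M%:R ->
  (\int[@lebesgue_measure R]_t
     ((if quant M t == quant M x0 then a + b * (t - (l + r) / 2) else 0))%:E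
   = (a / M%:R)%:E)%E.
Proof.
move=> M0 El Er.
have MP : (0 : R) < M%:R by rewrite ltr0n.
have lr : r - l = M%:R^-1 by rewrite Er El intrD -mulrBl addrAC subrr add0r mul1r.
have rl : l < r by rewrite -subr_gt0 lr invr_gt0.
have -> : (fun t => ((if quant M t == quant M x0 then a + b * (t - (l + r) / 2) else 0))%:E)
   = ((fun t => (a + b * (t - (l + r) / 2))%:E) \_ `[l, r[).
  apply/funext => t; rewrite /patch quant_eqE // -El -Er.
  rewrite mem_setE in_itv /=. by case: ifP.
rewrite -integral_mkcond integral_itv_bndo_bndc; last first.
  apply/measurable_realfun.measurable_EFinP; apply: measurable_funTS.
  exact: measurable_realfun.continuous_measurable_fun (lin_cont _ _ _).
by rewrite lin_int // lr.
Qed.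

Local Open Scope ereal_scope.
Lemma le_int_ge0 (f g : R -> \bar R) : (forall x, 0 <= f x) -> (forall x, f x <= g x) ->
  \int[@lebesgue_measure R]_x f x <= \int[@lebesgue_measure R]_x g x.
Proof.
move=> f0 fg.
have g0 : forall x, 0 <= g x by move=> x; exact: le_trans (f0 x) (fg x).
rewrite (ge0_integralTE (@lebesgue_measure R) f0) (ge0_integralTE (@lebesgue_measure R) g0).
apply: ereal_sup_le => _ [h hf <-]; exists h => //= x.
exact: le_trans (hf x) (fg x).
Qed.

Lemma int_le_pos (f : R -> \bar R) :
  \int[@lebesgue_measure R]_x f x <= \int[@lebesgue_measure R]_x (f^\+ x).
Proof.
rewrite [X in X <= _]integralE.
rewrite -[X in _ <= X]sube0; apply: leeB => //.
apply: integral_ge0 => x _; exact: funeneg_ge0.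
Qed.

Lemma iint_ge0 k (f : 'rV[R]_k -> \bar R) : (forall y, 0 <= f y) -> 0 <= iint f.
Proof.
elim: k f => [|k IH] f f0 /=; first exact: f0.
apply: integral_ge0 => t _; apply: IH => v; exact: f0.
Qed.

Lemma iint0 k : iint (fun _ : 'rV[R]_k => 0) = 0.
Proof.
elim: k => [|k IH] //=.
have -> : (fun t : R => iint (fun _ : 'rV[R]_k => 0)) = cst 0 by apply/funext => t; exact: IH.
exact: integral0.
Qed.
Local Close Scope ereal_scope.

Lemma quantv_row (M k : nat) (t : R) (v : 'rV[R]_k) :
  quantv M (row_mx (\row_(i < 1) t) v) = row_mx (\row_(i < 1) quant M t) (quantv M v).
Proof.
apply/matrixP => i j; rewrite !mxE; case: splitP => j' _; by rewrite !mxE.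
Qed.

Lemma quantv_row_eq (M k : nat) (t s : R) (v w : 'rV[R]_k) :
  (quantv M (row_mx (\row_(i < 1) t) v) == quantv M (row_mx (\row_(i < 1) s) w)) =
  (quant M t == quant M s) && (quantv M v == quantv M w).
Proof.
rewrite !quantv_row; apply/eqP/andP => [/eq_row_mx [h1 h2]|[/eqP h1 /eqP h2]].
  split; last by apply/eqP.
  by have := congr1 (fun A : 'rV[R]_1 => A 0 0) h1; rewrite !mxE => ->.
by rewrite h1 h2.
Qed.

Lemma l1dist_row k (t s : R) (v w : 'rV[R]_k) :
  @l1dist R k.+1 (row_mx (\row_(i < 1) t) v) (row_mx (\row_(i < 1) s) w) =
  `|t - s| + l1dist v w.
Proof.
rewrite /l1dist (@big_split_ord _ _ _ 1 k) /= big_ord1.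
congr (_ + _).
  by rewrite !mxE; case: splitP => j' /= Hj; rewrite ?mxE.
apply: eq_bigr => i _; rewrite !mxE; case: splitP => j' /= Hj.
  by exfalso; move: (ltn_ord j'); rewrite -Hj.
by rewrite (_ : j' = i) //; apply: val_inj; move: Hj => /= /eqP; rewrite eqSS => /eqP.
Qed.

Lemma l1dist_xx k (v : 'rV[R]_k) : l1dist v v = 0.
Proof. by rewrite /l1dist big1 // => i _; rewrite subrr normr0. Qed.


Lemma abs_chord (l r t x0 : R) : l < r -> l <= t <= r -> l <= x0 <= r ->
  `|t - x0| <= (r - l) / 2 + (l + r - 2 * x0) / (r - l) * (t - (l + r) / 2).
Proof.
move=> lr /andP[lt tr] /andP[lx xr].
have d0 : 0 < r - l by rewrite subr_gt0.
have -> : (r - l) / 2 + (l + r - 2 * x0) / (r - l) * (t - (l + r) / 2) =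
   ((x0 - l) * (r - t) + (r - x0) * (t - l)) / (r - l).
  by field; rewrite lt0r_neq0.
rewrite ler_pdivlMr //.
have h1 : 0 <= (x0 - l) * (r - t) by apply: mulr_ge0; rewrite subr_ge0.
have h2 : 0 <= (r - x0) * (t - l) by apply: mulr_ge0; rewrite subr_ge0.
case: (lerP x0 t) => xt.
  nra.
nra.
Qed.


Lemma main (M : nat) (L : R) (M0 : (0 < M)%N) (L0 : 0 <= L) k :
  forall (f : 'rV[R]_k -> R) (x : 'rV[R]_k),
  (forall y, 0 <= f y) -> (forall y z, `|f y - f z| <= L * l1dist y z) ->
  (((M%:R ^+ k)^-1 * (f x - L * k%:R / (2 * M%:R)))%:E <=
     iint (fun y => (f y * (if quantv M y == quantv M x then 1 else 0))%:E))%E /\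
  (iint (fun y => (f y * (if quantv M y == quantv M x then 1 else 0))%:E) <=
     ((M%:R ^+ k)^-1 * (f x + L * k%:R / (2 * M%:R)))%:E)%E.
Proof.
have MP : (0 : R) < M%:R by rewrite ltr0n.
elim: k => [|k IH] f x f0 fL.
  rewrite /= (thinmx0 x) eqxx mulr1 expr0 invr1 !mul1r mulr0 mul0r subr0 addr0.
  by split.
pose x0 : R := x 0 0; pose x' := rsubmx (x : 'rV_(1 + k)).
have ex : x = row_mx (\row_(i < 1) x0) x'.
  apply/matrixP => i j; rewrite !mxE; case: splitP => j' /= Hj; rewrite !mxE.
    by rewrite (ord1 i); congr (x _ _); apply: val_inj; rewrite /= Hj (ord1 j').
  by congr (x _ _); apply: val_inj; rewrite /= Hj.
rewrite ex; clearbody x0 x'; clear ex x.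
set fX := f (row_mx (\row_(i < 1) x0) x').
pose l : R := (Num.floor (M%:R * x0))%:~R / M%:R.
pose r : R := (Num.floor (M%:R * x0) + 1)%:~R / M%:R.
pose s : R := (M%:R ^+ k)^-1.
pose B : R := L * k%:R / (2 * M%:R).
pose ga : R := (l + r - 2 * x0) / (r - l).
have s0 : 0 <= s by rewrite /s invr_ge0 exprn_ge0 // ltW.
have lr : r - l = M%:R^-1 by rewrite /r /l intrD -mulrBl addrAC subrr add0r mul1r.
have rl : l < r by rewrite -subr_gt0 lr invr_gt0.
have x0I : l <= x0 <= r by move: (eqxx (quant M x0)); rewrite quant_eqE // => /andP[-> /ltW].
have tI : forall t, quant M t == quant M x0 -> l <= t <= r.
  by move=> t; rewrite quant_eqE // => /andP[-> /ltW].
have gbound : forall t, quant M t == quant M x0 ->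
    `|f (row_mx (\row_(i < 1) t) x') - fX| <= L * ((r - l) / 2 + ga * (t - (l + r) / 2)).
  move=> t Ht; apply: le_trans (fL _ _) _; rewrite l1dist_row l1dist_xx addr0.
  by apply: (ler_wpM2l L0); apply: abs_chord => //; apply: tI.
have gL : forall t (y z : 'rV_k), `|f (row_mx (\row_(i < 1) t) y) - f (row_mx (\row_(i < 1) t) z)|
    <= L * l1dist y z.
  by move=> t y z; apply: le_trans (fL _ _) _; rewrite l1dist_row subrr normr0 add0r.
pose h := fun t => if quant M t == quant M x0 then
   iint (fun v => (f (row_mx (\row_(i < 1) t) v) * (if quantv M v == quantv M x' then 1 else 0))%:E)
   else 0%E.
have Hint : iint (fun y : 'rV_k.+1 => (f y * (if quantv M y == quantv M (row_mx (\row_(i < 1) x0) x') then 1 else 0))%:E)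
   = (\int[@lebesgue_measure R]_t h t)%E.
  rewrite [LHS]/=; congr (integral _ _ _); apply/funext => t; rewrite /h.
  case: ifP => Ht.
    by congr iint; apply/funext => v; rewrite quantv_row_eq Ht.
  by rewrite -(iint0 k); congr iint; apply/funext => v; rewrite quantv_row_eq Ht /= mulr0.
rewrite Hint.
have h0 : forall t, (0 <= h t)%E.
  move=> t; rewrite /h; case: ifP => // _; apply: iint_ge0 => v.
  by rewrite lee_fin; apply: mulr_ge0 => //; case: ifP.
pose a1 := s * (fX + B) + s * L * ((r - l) / 2).
pose b1 := s * L * ga.
pose a2 := s * (fX - B) - s * L * ((r - l) / 2).
pose b2 := - (s * L * ga).
have cU := @cell_int M x0 a1 b1 l r M0 (erefl l) (erefl r).
have cD := @cell_int M x0 a2 b2 l r M0 (erefl l) (erefl r).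
have Mn0 : M%:R != 0 :> R by rewrite lt0r_neq0.
have Mkn0 : M%:R ^+ k != 0 :> R by rewrite expf_neq0.
have eqU : M%:R ^- k.+1 * (fX + L * k.+1%:R / (2 * M%:R)) = a1 / M%:R.
  rewrite /a1 lr /s /B exprSr -addn1 natrD. field.
  by rewrite Mn0 Mkn0.
have eqD : M%:R ^- k.+1 * (fX - L * k.+1%:R / (2 * M%:R)) = a2 / M%:R.
  rewrite /a2 lr /s /B exprSr -addn1 natrD. field.
  by rewrite Mn0 Mkn0.
split.
- rewrite eqD -cD; apply: le_trans (int_le_pos _) _.
  apply: le_int_ge0 => t; first exact: funepos_ge0.
  rewrite funeposE ge_max h0 andbT /h; case: ifP => Ht; last by [].
  have [lo _] := IH (fun v => f (row_mx (\row_(i < 1) t) v)) x' (fun v => f0 _) (gL t).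
  apply: le_trans lo; rewrite lee_fin.
  have := gbound t Ht; rewrite ler_norml => /andP[g1 g2].
  have -> : a2 + b2 * (t - (l + r) / 2) =
     s * (fX - L * ((r - l) / 2 + ga * (t - (l + r) / 2)) - B) by rewrite /a2 /b2; ring.
  apply: (ler_wpM2l s0); rewrite /B; lra.
- apply: (@le_trans _ _ (\int[@lebesgue_measure R]_t
     ((if quant M t == quant M x0 then a1 + b1 * (t - (l + r) / 2) else 0))%:E)%E).
    apply: le_int_ge0 h0 _ => t; rewrite /h; case: ifP => Ht; last by [].
    have [_ up] := IH (fun v => f (row_mx (\row_(i < 1) t) v)) x' (fun v => f0 _) (gL t).
    apply: le_trans up _; rewrite lee_fin.
    have := gbound t Ht; rewrite ler_norml => /andP[g1 g2].
    have -> : a1 + b1 * (t - (l + r) / 2) =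
       s * (fX + L * ((r - l) / 2 + ga * (t - (l + r) / 2)) + B) by rewrite /a1 /b1; ring.
    apply: (ler_wpM2l s0); rewrite /B; lra.
  by rewrite cU eqU.
Qed.

End S.

Theorem lemma3 (R : realType) (K M : nat) (L : R) (p : 'rV[R]_K -> R) :
  (0 < M)%N -> 0 < L ->
  (forall x, 0 <= p x) ->
  iint (fun x => (p x)%:E) = 1%E ->
  iint (fun x => (p x * (if in_cube x then 0 else 1))%:E) = 0%E ->
  (forall x y, `|p x - p y| <= L * l1dist x y) ->
  forall x : 'rV[R]_K, in_cube x ->
    `|p x - qdens M p x| <= L * K%:R / (2 * M%:R).
Proof.
move=> M0 L0 p0 _ _ pL x _.
have [lo up] := @main R M L M0 (ltW L0) K p x p0 pL.
rewrite /qdens.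
move: lo up.
case: (iint _) => [c| |] lo up //.
rewrite lee_fin in lo; rewrite lee_fin in up; rewrite /=.
have MP : (0 : R) < M%:R by rewrite ltr0n.
have MK : (0 : R) < M%:R ^+ K by rewrite exprn_gt0.
have u := ler_wpM2l (ltW MK) up.
have l := ler_wpM2l (ltW MK) lo.
rewrite mulrA mulfV ?lt0r_neq0 // mul1r in u.
rewrite mulrA mulfV ?lt0r_neq0 // mul1r in l.
rewrite ler_norml; apply/andP; split; lra.
Qed.
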